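(* Let $R$ be a commutative noetherian ring and let $\mathcal S$ be a subcategory of $R$-modules which is closed under submodules, extensions and direct unions. Then $\mathcal S$ satisfies the condition $C_{\mathfrak a}$ for every ideal $\mathfrak a$ of $R$.
   Context: A subcategory $\mathcal S$ satisfies the condition $C_{\mathfrak a}$ if for every $R$-module $M$: whenever $\Gamma_{\mathfrak a}(M)=M$ and $(0:_M\mathfrak a)\in\mathcal S$, then $M\in\mathcal S$. Closed under direct unions means: if a module is the union of a directed family of submodules each in $\mathcal S$, it lies in $\mathcal S$. *)

(* Defs.v *)
From HB Require Import structures.
From mathcomp Require Import all_boot all_order all_algebra.
Set Implicit Arguments. Unset Strict Implicit. Unset Printing Implicit Defensive.
Import GRing.Theory.
Local Open Scope ring_scope.

Definition is_ideal (R : comPzRingType) (I : R -> Prop) : Prop :=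
  [/\ I 0, (forall x y, I x -> I y -> I (x + y)) & (forall r x, I x -> I (r * x))].

Definition noetherian (R : comPzRingType) : Prop :=
  forall I : nat -> R -> Prop, (forall n, is_ideal (I n)) ->
    (forall n x, I n x -> I n.+1 x) ->
    exists n, forall m x, (n <= m)%N -> I m x -> I n x.

Definition is_submod (R : comPzRingType) (M : lmodType R) (N : M -> Prop) : Prop :=
  [/\ N 0, (forall x y, N x -> N y -> N (x + y)) & (forall r x, N x -> N (r *: x))].

(* A "subcategory" S of R-modules: a module is represented as a submodule N of
   some ambient module M; S M N means "the module N belongs to S". *)
Definition modclass (R : comPzRingType) := forall M : lmodType R, (M -> Prop) -> Prop.

Definition img (R : comPzRingType) (M M' : lmodType R) (f : M -> M') (N : M -> Prop) : M' -> Prop :=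
  fun y => exists2 x, N x & f x = y.

Definition closed_iso (R : comPzRingType) (S : modclass R) : Prop :=
  forall (M M' : lmodType R) (f : {linear M -> M'}) (N : M -> Prop),
    is_submod N -> (forall x y, N x -> N y -> f x = f y -> x = y) ->
    (S M N <-> S M' (img f N)).

Definition closed_sub (R : comPzRingType) (S : modclass R) : Prop :=
  forall (M : lmodType R) (N N' : M -> Prop), is_submod N -> is_submod N' ->
    (forall x, N' x -> N x) -> S M N -> S M N'.

(* closed under extensions: for a short exact sequence
   0 -> N ∩ ker f -> N -> f(N) -> 0, if both ends lie in S then so does N. *)
Definition closed_ext (R : comPzRingType) (S : modclass R) : Prop :=
  forall (M M' : lmodType R) (f : {linear M -> M'}) (N : M -> Prop),
    is_submod N -> S M (fun x => N x /\ f x = 0) -> S M' (img f N) -> S M N.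

Definition closed_dunion (R : comPzRingType) (S : modclass R) : Prop :=
  forall (M : lmodType R) (N : M -> Prop) (I : Type) (F : I -> M -> Prop),
    is_submod N -> inhabited I -> (forall i, is_submod (F i)) ->
    (forall i j, exists k, (forall x, F i x -> F k x) /\ (forall x, F j x -> F k x)) ->
    (forall i, S M (F i)) ->
    (forall x, N x <-> exists i, F i x) ->
    S M N.

(* x is killed by the ideal a^n: every product of n elements of a kills x *)
Definition killed_by_pow (R : comPzRingType) (M : lmodType R) (a : R -> Prop) (n : nat) (x : M) : Prop :=
  forall s : 'I_n -> R, (forall i, a (s i)) -> (\prod_(i < n) s i) *: x = 0.

Definition a_torsion (R : comPzRingType) (M : lmodType R) (a : R -> Prop) (N : M -> Prop) : Prop :=
  forall x, N x -> exists n, killed_by_pow a n x.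

Definition annsub (R : comPzRingType) (M : lmodType R) (a : R -> Prop) (N : M -> Prop) : M -> Prop :=
  fun x => N x /\ forall r, a r -> r *: x = 0.

Definition condC (R : comPzRingType) (S : modclass R) (a : R -> Prop) : Prop :=
  forall (M : lmodType R) (N : M -> Prop), is_submod N ->
    a_torsion a N -> S M (annsub a N) -> S M N.

(* Main.v *)
Require Import Defs.
From mathcomp Require Import all_boot all_order all_algebra.
From Stdlib Require Import Classical ClassicalEpsilon.
Set Implicit Arguments. Unset Strict Implicit. Unset Printing Implicit Defensive.
Import GRing.Theory.
Local Open Scope ring_scope.

Section Aux.
Variable R : comPzRingType.

Fixpoint span (l : seq R) (r : R) : Prop :=
  match l with
  | [::] => r = 0
  | g :: l => exists c y, span l y /\ r = c * g + y
  end.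

Fixpoint inA (a : R -> Prop) (l : seq R) : Prop :=
  match l with [::] => True | g :: l => a g /\ inA a l end.

Lemma span_ideal l : is_ideal (span l).
Proof.
elim: l => [|g l [H0 HD HM]] /=.
  split => [//|x y -> ->|r x ->]; by rewrite ?addr0 ?mulr0.
split.
- by exists 0, 0; rewrite mul0r addr0.
- move=> x y [c1 [y1 [s1 ->]]] [c2 [y2 [s2 ->]]].
  exists (c1 + c2), (y1 + y2); split; first exact: HD.
  by rewrite mulrDl -!addrA; congr (_ + _); rewrite addrCA.
- move=> r x [c [y [s ->]]]; exists (r * c), (r * y); split; first exact: HM.
  by rewrite mulrDr mulrA.
Qed.

Lemma span_cons g l y : span l y -> span (g :: l) y.
Proof. by move=> s; exists 0, y; rewrite mul0r add0r. Qed.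

Lemma fg (a : R -> Prop) : noetherian R -> is_ideal a ->
  exists l, inA a l /\ (forall r, a r -> span l r).
Proof.
move=> noe [a0 aD aM].
pose P l g := a g /\ (~ span l g \/ forall h, a h -> span l h).
have exP : forall l, exists g, P l g.
  move=> l; case: (classic (forall h, a h -> span l h)) => H.
    by exists 0; split => //; right.
  have [h Hh] := not_all_ex_not _ _ H.
  have [ah nh] := imply_to_and _ _ Hh.
  by exists h; split => //; left.
pose nx l := epsilon (inhabits (0 : R)) (P l).
have Pnx : forall l, P l (nx l) by move=> l; apply: epsilon_spec; apply: exP.
pose L := fix L n := if n is n'.+1 then nx (L n') :: L n' else [::].
have [n Hn] := noe (fun n => span (L n)) (fun n => span_ideal _)
  (fun n x h => span_cons _ h).
exists (L n); split.
  elim: n {Hn} => [//|n IH] /=; split => //; by case: (Pnx (L n)).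
have [_ [nin|//]] := Pnx (L n).
exfalso; apply: nin; apply: (Hn n.+1) => //.
by exists 1, 0; split; [case: (span_ideal (L n)) | rewrite mul1r addr0].
Qed.

Variable M : lmodType R.

Fixpoint kills (l : seq R) (x : M) : Prop :=
  match l with [::] => True | g :: l => g *: x = 0 /\ kills l x end.

Lemma kills_span l x r : kills l x -> span l r -> r *: x = 0.
Proof.
elim: l r => [|g l IH] r /=; first by move=> _ ->; rewrite scale0r.
move=> [gx kl] [c [y [s ->]]].
by rewrite scalerDl -scalerA gx scaler0 add0r IH.
Qed.

Lemma kbp_submod (a : R -> Prop) n (N : M -> Prop) : is_submod N ->
  is_submod (fun x => N x /\ killed_by_pow a n x).
Proof.
move=> [N0 ND NZ]; split.
- by split => // s _; rewrite scaler0.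
- move=> x y [nx kx] [ny ky]; split; first exact: ND.
  by move=> s hs; rewrite scalerDr kx ?ky ?addr0.
- move=> r x [nx kx]; split; first exact: NZ.
  by move=> s hs; rewrite scalerA mulrC -scalerA kx ?scaler0.
Qed.

Lemma kbp_succ (a : R -> Prop) n (x : M) : a 0 ->
  killed_by_pow a n x -> killed_by_pow a n.+1 x.
Proof.
move=> a0 k s hs; rewrite big_ord_recr /= mulrC -scalerA.
rewrite (k (fun i => s (widen_ord (leqnSn n) i))) ?scaler0 //.
Qed.

Lemma kbp_step (a : R -> Prop) n (x : M) g : a g ->
  killed_by_pow a n.+1 x -> killed_by_pow a n (g *: x).
Proof.
move=> ag k s hs.
pose s' (i : 'I_n.+1) := if (insub (val i) : option 'I_n) is Some j then s j else g.
have hs' : forall i, a (s' i).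
  by move=> i; rewrite /s'; case: insub.
rewrite scalerA -(k s' hs') big_ord_recr /=.
congr (_ * _ *: _).
  by apply: eq_bigr => i _; rewrite /s' /= valK.
by rewrite /s' insubN //= ltnn.
Qed.

End Aux.

Theorem proposition3p1 (R : comPzRingType) (S : modclass R) :
  noetherian R -> closed_sub S -> closed_ext S -> closed_dunion S ->
  closed_iso S ->
  forall a : R -> Prop, is_ideal a -> condC S a.
Proof.
move=> noe csub cext cdu _ a aI M N NS tor SA.
have [a0 aD aM] := aI.
have [l [inl spl]] := fg noe aI.
have [N0 ND NZ] := NS.
pose F n := fun x => N x /\ killed_by_pow a n x.
have FS : forall n, is_submod (F n) by move=> n; apply: kbp_submod.
have AS : is_submod (annsub a N).
  split.
  - by split => // r _; rewrite scaler0.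
  - move=> x y [nx kx] [ny ky]; split; first exact: ND.
    by move=> r hr; rewrite scalerDr kx ?ky ?addr0.
  - move=> r x [nx kx]; split; first exact: NZ.
    by move=> s hs; rewrite scalerA mulrC -scalerA kx ?scaler0.
have Fmono : forall i j, (i <= j)%N -> forall x, F i x -> F j x.
  move=> i j /subnK <-; elim: (j - i)%N => [//|k IH] x /IH [nx kx].
  by rewrite addSn; split => //; apply: kbp_succ.
have FSn : forall n, S M (F n).
  elim => [|n IH].
    apply: (csub _ _ _ AS (FS 0%N)) SA => x [nx kx]; split => // r _.
    have := kx (fun _ => 0) (fun _ => a0); rewrite big_ord0 scale1r => ->.
    by rewrite scaler0.
  pose Q l' := fun x => F n.+1 x /\ kills l' x.
  have QS : forall l', is_submod (Q l').
    move=> l'; have [F0 FD FZ] := FS n.+1; split.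
    - split => //; elim: l' => //= g l' H; by rewrite scaler0.
    - move=> x y [fx kx] [fy ky]; split; first exact: FD.
      elim: l' kx ky => //= g l' IH' [gx kx] [gy ky].
      by rewrite scalerDr gx gy addr0; split => //; apply: IH'.
    - move=> r x [fx kx]; split; first exact: FZ.
      elim: l' kx => //= g l' IH' [gx kx].
      by rewrite scalerA mulrC -scalerA gx scaler0; split => //; apply: IH'.
  have Ql : S M (Q l).
    apply: (csub _ _ _ AS (QS l)) SA => x [[nx _] kx]; split => // r ar.
    exact: kills_span kx (spl r ar).
  have step : forall l', inA a l' -> S M (Q l') -> S M (Q [::]).
    elim => [//|g l' IH'] /= [ag il'] Sg; apply: IH' => //.
    apply: (cext M M ( *:%R g) _ (QS l')).
    - apply: (csub _ _ _ (QS (g :: l'))) Sg; first last.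
        by move=> x [[fx kx] gx]; split => //.
      have [Q0 QD QZ] := QS l'; split.
      + by split => //; rewrite /= linear0.
      + move=> x y [qx gx] [qy gy]; split; first exact: QD.
        by rewrite /= scalerDr gx gy addr0.
      + move=> r x [qx gx]; split; first exact: QZ.
        by rewrite /= scalerA mulrC -scalerA gx scaler0.
    - apply: (csub _ _ _ (FS n) _ _ IH).
      + have [Q0 QD QZ] := QS l'; split.
        * by exists 0 => //=; rewrite scaler0.
        * move=> _ _ [x qx <-] [y qy <-]; exists (x + y); first exact: QD.
          by rewrite /= scalerDr.
        * move=> r _ [x qx <-]; exists (r *: x); first exact: QZ.
          by rewrite /= !scalerA mulrC.
      + move=> _ [x [[nx kx] _] <-] /=; split; first exact: NZ.
        exact: kbp_step.
  have H := step l inl Ql; apply: (csub _ _ _ (QS [::]) (FS n.+1) _ H) => x fx; by split.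
apply: (cdu M N nat F NS (inhabits 0%N) FS) => //.
- by move=> i j; exists (maxn i j); split; apply: Fmono;
    rewrite ?leq_maxl ?leq_maxr.
- move=> x; split.
    by move=> nx; have [n kn] := tor x nx; exists n.
  by case=> n [].
Qed.
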